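(* Consider the coalition game and the closed-loop system described in the context (Euler–Lagrange agent dynamics with controller (C), auxiliary dynamics (A), multiplier dynamics (M), gradient-tracking dynamics (T) and action-estimation dynamics (E)). Suppose Assumptions 1–4 of the context hold. If a constant state $(\mathbf{x}^*,\hat\mu^*,\hat d^*,\hat{\mathbf{x}}^*,\eta^*,\vartheta^*,\omega^*,\lambda^*,\rho^*,\xi^*,\zeta^*,s^* )$ (with all time derivatives of these closed-loop states equal to zero) is an equilibrium of this closed-loop system, then $\mathbf{x}^*=\operatorname{col}\{x_{11}^*,\dots,x_{Nm_N}^*\}$ is a Nash equilibrium of the coalition game.
   Context: Coalition game. There are $N$ coalitions $\mathbb{N}=\{1,\dots,N\}$; coalition $i$ has agents $\mathbb{V}_i=\{1,\dots,m_i\}$; $n=\sum_i m_i$. Agent $(i,j)$ has action $x_{ij}\in\mathbb{R}^r$; $\mathbf{x}_i=\operatorname{col}\{x_{i1},\dots,x_{im_i}\}$, $\mathbf{x}=\operatorname{col}\{\mathbf{x}_1,\dots,\mathbf{x}_N\}=(\mathbf{x}_i,\mathbf{x}_{-i})$. Agent $(i,j)$ has cost $J_{ij}(\mathbf{x})$; coalition $i$ has cost $J_i(\mathbf{x})=\frac1{m_i}\sum_{j=1}^{m_i}J_{ij}(\mathbf{x})$. Local constraints $\Omega_{ij}=\{x_{ij}\in\mathbb{R}^r: B_{ij}x_{ij}\le b_{ij}\}$ and coupling constraints $\mathbb{X}_i=\{\mathbf{x}_i: \sum_{j}G_{ij}x_{ij}\le\sum_j g_{ij}\}$, with constant matrices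 $B_{ij}$, $G_{ij}\in\mathbb{R}^{p\times r}$ and vectors $b_{ij},g_{ij}$ (inequalities elementwise). Let $\bm\Omega=\prod_{i,j}\Omega_{ij}$, $\mathbb{X}=\prod_i\mathbb{X}_i$. A profile $\mathbf{x}^\star$ is a Nash equilibrium (NE) if for every $i$, $J_i(\mathbf{x}_i^\star,\mathbf{x}_{-i}^\star)\le J_i(\mathbf{x}_i,\mathbf{x}_{-i}^\star)$ for all $\mathbf{x}_i$ with $(\mathbf{x}_i,\mathbf{x}_{-i}^\star)\in\bm\Omega\cap\mathbb{X}$. Assumption 1: each $J_{ij}$ is continuously differentiable and $\hbar$-strongly convex in $\mathbf{x}_i$ for any fixed $\mathbf{x}_{-i}\in\prod_{k\ne i}\bm\Omega_k$. Assumption 2: each $\partial J_{ij}/\partial\mathbf{x}_i$ is globally Lipschitz with constant $\ell$. Assumption 3: for each $i$ there is $\mathbf{x}_i$ with $\sum_j G_{ij}x_{ij}<\sum_j g_{ij}$ and $B_{ij}x_{ij}<b_{ij}$ for all $j$. Assumption 4: for each $i$ the communication graph $\mathcal{G}_i$ on $\mathbb{V}_i$ (adjacency $[a^i_{jl}]$, symmetric 0/1) is undirected and connected; the graph $\bar{\mathcal{G}}$ on all $n$ agents, reindexed so agent $(i,j)$ has index $\sum_{l<i}m_l+j$, with adjacency $[\bar a_{pl}]$ ($\bar a_{pl}=1$ iff $(p,l)$ is an edge), is directed and strongly connected. Agent dynamics: $E_{ij}(x_{ij})\ddot x_{ij}+C_{ij}(x_{ij},\dot x_{ij})\dot x_{ij}+D_{ij}(x_{ij})=u_{ij}+d_{ij}$,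 where $d_{ij}(t)$ is a disturbance bounded by an unknown constant $\tilde d_{ij}$, and the Euler–Lagrange structure admits a known regressor $\Upsilon_{ij}$ with $E_{ij}(x_{ij})\hat y+C_{ij}(x_{ij},\dot x_{ij})\tilde y+D_{ij}(x_{ij})=\Upsilon_{ij}(x_{ij},\dot x_{ij},\hat y,\tilde y)\mu_{ij}$ for all $\hat y,\tilde y$, with unknown constant $\mu_{ij}$. $\mathcal{P}_+$ is the elementwise projection onto $[0,\infty)$; $\operatorname{sgn}$ is elementwise sign. (C) $u_{ij}=\Upsilon_{ij}(x_{ij},\dot x_{ij},\ddot{\hat x}_{ij},\dot{\hat x}_{ij})\hat\mu_{ij}-\gamma e_{ij}-\operatorname{sgn}(e_{ij})\hat d_{ij}$, $\dot{\hat\mu}_{ij}=-\Upsilon_{ij}^\top e_{ij}$, $\dot{\hat d}_{ij}=e_{ij}^\top\operatorname{sgn}(e_{ij})$ ($\hat d_{ij}$ scalar), $e_{ij}=\dot x_{ij}-\dot{\hat x}_{ij}$, $\dot{\hat x}_{ij}=\vartheta_{ij}-(x_{ij}-\eta_{ij})$. (A) $\dot\eta_{ij}=\vartheta_{ij}$, $\dot\vartheta_{ij}=-\alpha\vartheta_{ij}-\big(\xi_{ijj}+G_{ij}^\top\mathcal{P}_+(\lambda_{ij})+B_{ij}^\top\mathcal{P}_+(\omega_{ij}+B_{ij}\eta_{ij}-b_{ij})\big)$. (M) $\dot\omega_{ij}=B_{ij}\vartheta_{ij}-\omega_{ij}+\mathcal{P}_+(\omega_{ij}+B_{ij}\eta_{ij}-b_{ij})$;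 $\dot\lambda_{ij}=-\lambda_{ij}+\mathcal{P}_+(\lambda_{ij})+G_{ij}\eta_{ij}-g_{ij}-\sum_l a^i_{jl}(\rho_{ij}-\rho_{il})-\sum_l a^i_{jl}(\mathcal{P}_+(\lambda_{ij})-\mathcal{P}_+(\lambda_{il}))$; $\dot\rho_{ij}=\sum_l a^i_{jl}(\mathcal{P}_+(\lambda_{ij})-\mathcal{P}_+(\lambda_{il}))$, with $\lambda_{ij},\rho_{ij}\in\mathbb{R}^p$. (T) for $k\in\mathbb{V}_i$: $\dot\xi_{ijk}=-\beta\big(\xi_{ijk}+\sum_l a^i_{jl}(\xi_{ijk}-\xi_{ilk})+\sum_l a^i_{jl}(\zeta_{ijk}-\zeta_{ilk})-\frac{\partial J_{ij}}{\partial x_{ik}}(\chi_{ij})\big)$, $\dot\zeta_{ijk}=\beta\sum_l a^i_{jl}(\xi_{ijk}-\xi_{ilk})$, where $\chi_{ij}=\operatorname{col}\{s_{p,1},\dots,s_{p,n}\}\in\mathbb{R}^{rn}$ with $p=\sum_{l<i}m_l+j$, and $\frac{\partial J_{ij}}{\partial x_{ik}}(\chi_{ij})$ is the gradient of $J_{ij}$ with respect to the block of agent $(i,k)$ evaluated at $\chi_{ij}$. (E) Writing $\varsigma_p:=\eta_{ij}$ for the reindexed agent $p$, each agent $p$ keeps estimates $s_{p,l}\in\mathbb{R}^r$ ($l\ne p$), $s_{p,p}=\varsigma_p$, and with $s_{l,-p}=\operatorname{col}\{s_{l,q}\}_{q\ne p}$: $\dot s_{p,-p}=-\kappa\sum_{l=1}^n\bar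 a_{pl}(s_{p,-p}-s_{l,-p})$. Here $\alpha,\beta,\gamma,\kappa>0$ are constant gains. *)

(* Defs.v *)
From HB Require Import structures.
From mathcomp Require Import all_boot all_order all_algebra.
From mathcomp Require Import all_classical all_reals all_analysis.
Unset Printing Implicit Defensive.
Import Order.TTheory GRing.Theory Num.Theory.
Import numFieldNormedType.Exports.
Local Open Scope ring_scope.

Section CoalitionGame.
Variable R : realType.

Definition vle {n} (u v : 'cV[R]_n) := forall k, u k 0 <= v k 0.
Definition vlt {n} (u v : 'cV[R]_n) := forall k, u k 0 < v k 0.
Definition pplus {n} (v : 'cV[R]_n) : 'cV[R]_n := map_mx (fun a => Num.max a 0) v.
Definition vsgn {n} (v : 'cV[R]_n) : 'cV[R]_n := map_mx (fun a => Num.sg a) v.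
Definition sqn {n} (v : 'cV[R]_n) : R := \sum_k (v k 0) ^+ 2.

Variables (N : nat) (m : 'I_N -> nat) (r p : nat).

(* agents (i,j), i a coalition, j in V_i *)
Definition agent := {i : 'I_N & 'I_(m i)}.
Definition ag (i : 'I_N) (j : 'I_(m i)) : agent := existT _ i j.
(* action profiles x = col{x_ij} *)
Definition profile := agent -> 'cV[R]_r.
(* (y_i, x_{-i}) : coalition i's block taken from y, the rest from x *)
Definition mix (i : 'I_N) (y x : profile) : profile :=
  fun a => if tag a == i then y a else x a.
Definition setblock (x : profile) (c : agent) (v : 'cV[R]_r) : profile :=
  fun a => if a == c then v else x a.
Definition psqn (x : profile) : R := \sum_a sqn (x a).
Definition coal_sqn (i : 'I_N) (x : profile) : R :=
  \sum_(a | tag a == i) sqn (x a).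

Variables (qB : forall i, 'I_(m i) -> nat)
  (B : forall i (j : 'I_(m i)), 'M[R]_(qB i j, r))
  (b : forall i (j : 'I_(m i)), 'cV[R]_(qB i j))
  (G : forall i, 'I_(m i) -> 'M[R]_(p, r))
  (g : forall i, 'I_(m i) -> 'cV[R]_p).

Definition in_Omega_ij i (j : 'I_(m i)) (v : 'cV[R]_r) := vle (B i j *m v) (b i j).
Definition in_Omega (x : profile) := forall i (j : 'I_(m i)), in_Omega_ij i j (x (ag i j)).
Definition in_X_i (i : 'I_N) (x : profile) :=
  vle (\sum_(j < m i) G i j *m x (ag i j)) (\sum_(j < m i) g i j).
Definition in_X (x : profile) := forall i, in_X_i i x.

Variable J : agent -> profile -> R.
Definition Jc (i : 'I_N) (x : profile) : R := (m i)%:R^-1 * \sum_(j < m i) J (ag i j) x.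

Definition is_NE (xs : profile) := forall (i : 'I_N) (y : profile),
  in_Omega (mix i y xs) /\ in_X (mix i y xs) -> Jc i xs <= Jc i (mix i y xs).

(* gJ a c x = dJ_a/dx_c (x) *)
Variable gJ : agent -> agent -> profile -> 'cV[R]_r.

(* Assumption 1 (first part): J_a continuously differentiable with block
   gradients gJ a c (block partial derivatives exist and are continuous) *)
Definition C1_with_grad :=
  (forall a c (x : profile) (v : 'cV[R]_r),
     is_derive (0 : R) (1 : R) (fun t : R => J a (setblock x c (x c + t *: v)))
               (\sum_k gJ a c x k 0 * v k 0))
  /\ (forall a c (x : profile) (e : R), 0 < e -> exists2 d : R, 0 < d &
        forall y : profile, (forall c' k, `|y c' k 0 - x c' k 0| < d) ->
        forall k, `|gJ a c y k 0 - gJ a c x k 0| < e).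

Definition strongly_convex_coal (hb : R) :=
  0 < hb /\
  forall (a : agent) (x : profile),
    (forall c : agent, tag c != tag a -> in_Omega_ij (tag c) (tagged c) (x c)) ->
    forall (y z : profile) (t : R), 0 <= t <= 1 ->
      J a (mix (tag a) (fun c => t *: y c + (1 - t) *: z c) x)
      <= t * J a (mix (tag a) y x) + (1 - t) * J a (mix (tag a) z x)
         - hb / 2 * t * (1 - t) * coal_sqn (tag a) (fun c => y c - z c).

Definition grad_lipschitz (ell : R) :=
  forall (a : agent) (x y : profile),
    Num.sqrt (\sum_(c | tag c == tag a) sqn (gJ a c x - gJ a c y))
    <= ell * Num.sqrt (psqn (fun c => x c - y c)).

Definition slater :=
  forall i : 'I_N, exists x : profile,
    vlt (\sum_(j < m i) G i j *m x (ag i j)) (\sum_(j < m i) g i j) /\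
    forall j : 'I_(m i), vlt (B i j *m x (ag i j)) (b i j).

Definition graphs_ok (adj : forall i, rel 'I_(m i)) (abar : rel agent) :=
  (forall i, symmetric (adj i) /\ forall j l, connect (adj i) j l) /\
  (forall u v : agent, connect abar u v).

Definition EL_regressor
  (Ee : forall i, 'I_(m i) -> 'cV[R]_r -> 'M[R]_r)
  (Ce : forall i, 'I_(m i) -> 'cV[R]_r -> 'cV[R]_r -> 'M[R]_r)
  (De : forall i, 'I_(m i) -> 'cV[R]_r -> 'cV[R]_r)
  (qmu : forall i, 'I_(m i) -> nat)
  (Ups : forall i (j : 'I_(m i)), 'cV[R]_r -> 'cV[R]_r -> 'cV[R]_r -> 'cV[R]_r ->
          'M[R]_(r, qmu i j))
  (mu : forall i (j : 'I_(m i)), 'cV[R]_(qmu i j)) :=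
  forall i (j : 'I_(m i)) (x xd yh yt : 'cV[R]_r),
    Ee i j x *m yh + Ce i j x xd *m yt + De i j x = Ups i j x xd yh yt *m mu i j.

Definition bounded_disturbance (dist : forall i, 'I_(m i) -> R -> 'cV[R]_r) :=
  forall i (j : 'I_(m i)), exists dt : R, forall t : R, Num.sqrt (sqn (dist i j t)) <= dt.

(* s_{p,l} with the convention s_{p,p} = eta_p *)
Definition sfull (eta : profile) (s : agent -> agent -> 'cV[R]_r) (a : agent) : profile :=
  fun l => if l == a then eta a else s a l.

Definition closed_loop_equilibrium
  (adj : forall i, rel 'I_(m i)) (abar : rel agent)
  (Ee : forall i, 'I_(m i) -> 'cV[R]_r -> 'M[R]_r)
  (Ce : forall i, 'I_(m i) -> 'cV[R]_r -> 'cV[R]_r -> 'M[R]_r)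
  (De : forall i, 'I_(m i) -> 'cV[R]_r -> 'cV[R]_r)
  (qmu : forall i, 'I_(m i) -> nat)
  (Ups : forall i (j : 'I_(m i)), 'cV[R]_r -> 'cV[R]_r -> 'cV[R]_r -> 'cV[R]_r ->
          'M[R]_(r, qmu i j))
  (dist : forall i, 'I_(m i) -> R -> 'cV[R]_r)
  (alpha beta gamma kappa : R)
  (xs : profile) (muh : forall i (j : 'I_(m i)), 'cV[R]_(qmu i j))
  (dh : forall i, 'I_(m i) -> R) (xh eta th : profile)
  (om : forall i (j : 'I_(m i)), 'cV[R]_(qB i j))
  (lam rho : forall i, 'I_(m i) -> 'cV[R]_p)
  (xi zeta : forall i, 'I_(m i) -> 'I_(m i) -> 'cV[R]_r)
  (s : agent -> agent -> 'cV[R]_r) :=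
  forall (i : 'I_N) (j : 'I_(m i)),
  let a := ag i j in
  let xdot : 'cV[R]_r := 0 in let xddot : 'cV[R]_r := 0 in
  let xhdot : 'cV[R]_r := 0 in let xhddot : 'cV[R]_r := 0 in
  let e := xdot - xhdot in
  let u := Ups i j (xs a) xdot xhddot xhdot *m muh i j - gamma *: e - dh i j *: vsgn e in
  let sgm k : 'cV[R]_r := \sum_(l < m i) (nat_of_bool (adj i j l))%:R *: (xi i j k - xi i l k) in
  (forall t : R, Ee i j (xs a) *m xddot + Ce i j (xs a) xdot *m xdot + De i j (xs a)
                 = u + dist i j t) /\
  - ((Ups i j (xs a) xdot xhddot xhdot)^T *m e) = 0 /\
  (e^T *m vsgn e) 0 0 = 0 /\
  xhdot = th a - (xs a - eta a) /\
  th a = 0 /\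
  - alpha *: th a - (xi i j j + (G i j)^T *m pplus (lam i j)
                     + (B i j)^T *m pplus (om i j + B i j *m eta a - b i j)) = 0 /\
  B i j *m th a - om i j + pplus (om i j + B i j *m eta a - b i j) = 0 /\
  - lam i j + pplus (lam i j) + G i j *m eta a - g i j
    - \sum_(l < m i) (nat_of_bool (adj i j l))%:R *: (rho i j - rho i l)
    - \sum_(l < m i) (nat_of_bool (adj i j l))%:R *: (pplus (lam i j) - pplus (lam i l)) = 0 /\
  \sum_(l < m i) (nat_of_bool (adj i j l))%:R *: (pplus (lam i j) - pplus (lam i l)) = 0 /\
  (forall k : 'I_(m i),
    - beta *: (xi i j k + sgm k
               + \sum_(l < m i) (nat_of_bool (adj i j l))%:R *: (zeta i j k - zeta i l k)
               - gJ a (ag i k) (sfull eta s a)) = 0) /\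
  (forall k : 'I_(m i), beta *: sgm k = 0) /\
  (forall q : agent, q != a ->
    - kappa *: \sum_(l : agent) (nat_of_bool (abar a l))%:R *:
                 (sfull eta s a q - sfull eta s l q) = 0).

End CoalitionGame.

Arguments is_NE {R N m r p qB} B b G g J xs.
Arguments C1_with_grad {R N m r} J gJ.
Arguments strongly_convex_coal {R N m r qB} B b J hb.
Arguments grad_lipschitz {R N m r} gJ ell.
Arguments slater {R N m r p qB} B b G g.
Arguments graphs_ok {N m} adj abar.
Arguments EL_regressor {R N m r} Ee Ce De {qmu} Ups mu.
Arguments bounded_disturbance {R N m r} dist.
Arguments closed_loop_equilibrium {R N m r p qB} B b G g gJ adj abar Ee Ce De {qmu} Ups dist
  alpha beta gamma kappa xs muh dh xh eta th om lam rho xi zeta s.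

(* Main.v *)
Require Import Defs.
From HB Require Import structures.
From mathcomp Require Import all_boot all_order all_algebra.
From mathcomp Require Import all_classical all_reals all_analysis.
Import Order.TTheory GRing.Theory Num.Theory.
Local Open Scope ring_scope.
Local Open Scope classical_set_scope.
Local Open Scope ring_scope.
From mathcomp Require Import ring lra.
Import numFieldNormedType.Exports.
Lemma deriv_upper (R : realType) (f : R -> R) (df : R) :
  is_derive (0:R) (1:R) f df -> forall e : R, 0 < e ->
  exists2 d : R, 0 < d & forall t : R, 0 < t < d -> f t - f 0 <= t * (df + e).
Proof.
case=> Hd Hv e e0.
have H : (h^-1 *: ((f \o shift 0) (h *: 1) - f 0)) @[h --> 0^'] --> df.
  by rewrite -Hv; exact: Hd.
move/cvgrPdist_lt : H => /(_ e e0).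
rewrite /prop_near1 /= => /nbhs_ballP [d /= d0 Hb].
exists d => // t /andP [t0 td].
have : ball 0 d t by rewrite /ball /= sub0r normrN gtr0_norm.
move/Hb => /(_ (lt0r_neq0 t0)).
rewrite /= => Hl.
have E : t%:A + 0 = t by rewrite addr0 /GRing.scale /= mulr1.
rewrite E in Hl.
set q := t^-1 *: (f t - f 0) in Hl.
have Hq : q <= df + e.
  have : q - df <= `|df - q| by rewrite distrC ler_norm.
  move=> H1; apply/ltW; rewrite -ltrBlDl; exact: le_lt_trans H1 Hl.
have -> : f t - f 0 = t * q.
  by rewrite /q /GRing.scale /= mulrA mulfV ?mul1r // gt_eqF.
by rewrite ler_wpM2l // ltW.
Qed.
Lemma harm_le (R : realType) (T : finType) (e : rel T) (v : T -> R) (q : T) :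
  (forall u w, connect e u w) ->
  (forall a, a != q -> \sum_l (e a l : nat)%:R * (v a - v l) = 0) ->
  forall a, v a <= v q.
Proof.
move=> Hc Hh.
have [am _ Ham] : exists2 am, true & forall b, v b <= v am.
  case: (@arg_maxP _ R T q predT v isT) => am _ H; exists am => // b.
  exact: H.
suff : v q = v am by move=> -> a; exact: Ham.
suff H : forall pth b, path e b pth -> q = last b pth -> v b = v am -> v q = v am.
  by case/connectP: (Hc am q) => pth Hp Hl; exact: H Hp Hl erefl.
elim => [|c pth IH] b /=; first by move=> _ ->.
case/andP=> ebc Hp Hl Hvb.
case: (eqVneq b q) => [<- //|bq].
have H0 := psumr_eq0P _ (Hh b bq).
have Hc0 : (e b c : nat)%:R * (v b - v c) = 0.
  apply: H0 => // l _; apply: mulr_ge0 => //; rewrite subr_ge0 Hvb; exact: Ham.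
rewrite ebc mul1r in Hc0; move/eqP: Hc0; rewrite subr_eq0 => /eqP Hc0.
by apply: (IH c) => //; rewrite -Hc0.
Qed.

Arguments harm_le {R T e v q}.

Lemma harm_eq (R : realType) (T : finType) (e : rel T) (v : T -> R) (q : T) :
  (forall u w, connect e u w) ->
  (forall a, a != q -> \sum_l (e a l : nat)%:R * (v a - v l) = 0) ->
  forall a, v a = v q.
Proof.
move=> Hc Hh a; apply/eqP; rewrite eq_le (harm_le Hc Hh) /=.
have := @harm_le R T e (fun x => - v x) q Hc.
move=> H; rewrite -lerN2; apply: H => x xq.
rewrite (eq_bigr (fun l => - ((e x l : nat)%:R * (v x - v l)))) ?sumrN ?Hh ?oppr0 //.
by move=> l _; rewrite -mulrN opprB opprK addrC.
Qed.
Section Tang.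
Variables (R : realType) (T : finType) (r : nat).
Variables (F : (T -> 'cV[R]_r) -> R) (x0 : T -> 'cV[R]_r) (S : pred T) (g : T -> 'cV[R]_r).
Hypothesis Hconv : forall y z (t : R), 0 <= t <= 1 ->
  F (fun c => t *: y c + (1 - t) *: z c) <= t * F y + (1 - t) * F z.
Hypothesis Hder : forall c, S c -> forall v : 'cV[R]_r,
  is_derive (0:R) (1:R) (fun t => F (fun a => if a == c then x0 c + t *: v else x0 a))
    (\sum_k g c k 0 * v k 0).

Definition Gl (d : T -> 'cV[R]_r) := \sum_(c | S c) \sum_k g c k 0 * d c k 0.

Lemma two_neq0 : (2 : R) != 0. Proof. by rewrite pnatr_eq0. Qed.

Lemma upper (s : seq T) : (forall c, c \in s -> S c) ->
  forall d : T -> 'cV[R]_r, (forall a, a \notin s -> d a = 0) ->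
  forall e : R, 0 < e -> exists2 dl : R, 0 < dl & forall t : R, 0 < t < dl ->
    F (fun c => x0 c + t *: d c) - F x0 <= t * (Gl d + e).
Proof.
elim: s => [|c s IH] HS d Hd e e0.
  exists 1 => // t /andP [t0 _].
  have -> : (fun c => x0 c + t *: d c) = x0.
    by apply: funext => a; rewrite Hd // scaler0 addr0.
  have -> : Gl d = 0.
    by rewrite /Gl big1 // => a _; rewrite Hd // big1 // => k _; rewrite mxE mulr0.
  by rewrite subrr add0r mulr_ge0 // ltW.
have Sc : S c by apply: HS; rewrite inE eqxx.
pose d' := fun a => if a == c then 0 else d a.
have e20 : 0 < e / 2 by rewrite divr_gt0.
have HS' : forall c', c' \in s -> S c' by move=> c' cs; apply: HS; rewrite inE cs orbT.
have Hd' : forall a, a \notin s -> d' a = 0.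
  move=> a an; rewrite /d'; case: eqP => // /eqP ac; apply: Hd.
  by rewrite inE negb_or ac an.
have [dl2 dl20 H2] := IH HS' d' Hd' (e / 2) e20.
have [dl1 dl10 H1] := @deriv_upper _ _ _ (Hder c Sc (d c)) _ e20.
exists (Num.min dl1 dl2 / 2); first by rewrite divr_gt0 // lt_min dl10.
move=> t /andP [t0 tlt].
have t2 : 0 < 2 * t < Num.min dl1 dl2.
  rewrite mulr_gt0 //=; move: tlt; rewrite ltr_pdivlMr // mulrC //.
move: t2; rewrite lt_min => /andP [t20 /andP [td1 td2]].
have := H1 (2 * t); rewrite t20 td1 => /(_ isT) {}H1.
have := H2 (2 * t); rewrite t20 td2 => /(_ isT) {}H2.
have Ef0 : (fun a => if a == c then x0 c + 0 *: d c else x0 a) = x0.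
  by apply: funext => a; case: eqP => [->|]; rewrite ?scale0r ?addr0.
rewrite Ef0 in H1.
have Econv : (fun c0 => x0 c0 + t *: d c0) =
  (fun c0 => 2^-1 *: (fun a => if a == c then x0 c + (2 * t) *: d c else x0 a) c0
            + (1 - 2^-1) *: (fun c0 => x0 c0 + (2 * t) *: d' c0) c0).
  apply: funext => a /=; rewrite /d'; case: eqP => [->|_];
  apply/matrixP => k l; by rewrite !mxE; field.
have hc : 0 <= (2 : R)^-1 <= 1.
  by rewrite invr_ge0 ler0n /= invf_le1 // ler1n.
have := Hconv (fun a => if a == c then x0 c + (2 * t) *: d c else x0 a) (fun c0 => x0 c0 + (2 * t) *: d' c0) _ hc; rewrite -Econv => Hc.
have EG : Gl d = \sum_k g c k 0 * d c k 0 + Gl d'.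
  rewrite /Gl (bigD1 c) //= [X in _ = _ + X](bigD1 c) //= /d' eqxx.
  rewrite [X in _ = _ + (X + _)]big1 ?add0r; last by move=> k _; rewrite mxE mulr0.
  congr (_ + _); apply: eq_bigr => a /andP [_ /negPf ->] //.
rewrite EG.
have E1 : 1 - (2:R)^-1 = 2^-1 by field.
rewrite E1 in Hc.
have Ht : t = 2^-1 * (2 * t) by field.
set A := F _ in H1 Hc; set B := F _ in H2 Hc.
set D1 := \sum_k _ in H1 *; set D2 := Gl d' in H2 *.
have : F (fun c0 => x0 c0 + t *: d c0) - F x0 <= 2^-1 * (A - F x0) + 2^-1 * (B - F x0).
  by move: Hc; lra.
move=> H3; apply: (le_trans H3).
have h20 : 0 <= (2:R)^-1 by rewrite invr_ge0 ler0n.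
have H1' := ler_wpM2l h20 H1; have H2' := ler_wpM2l h20 H2.
have := lerD H1' H2'; move=> H4; apply: (le_trans H4).
rewrite [in X in _ <= X]Ht; lra.
Qed.


Hypothesis Hloc : forall y, F y = F (fun c => if S c then y c else x0 c).

Lemma tangent (y : T -> 'cV[R]_r) :
  \sum_(c | S c) \sum_k g c k 0 * (y c k 0 - x0 c k 0) <= F y - F x0.
Proof.
set tg := \sum_(c | S c) _.
pose s := [seq a <- enum T | S a].
have HS : forall c, c \in s -> S c by move=> c; rewrite mem_filter => /andP [].
pose d2 := fun c => if S c then x0 c - y c else 0.
have Hd2 : forall a, a \notin s -> d2 a = 0.
  move=> a; rewrite mem_filter mem_enum andbT /d2; by case: (S a).
have EG : Gl d2 = - tg.
  rewrite /Gl /tg -sumrN; apply: eq_bigr => c Sc; rewrite /d2 Sc -sumrN.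
  by apply: eq_bigr => k _; rewrite !mxE; ring.
apply/ler_addgt0Pr => e e0.
have [dl dl0 Hu] := @upper s HS d2 Hd2 e e0.
pose t := Num.min (dl / 2) 1.
have t0 : 0 < t by rewrite lt_min ltr01 andbT divr_gt0.
have t1 : t <= 1 by rewrite ge_min lexx orbT.
have tdl : t < dl.
  apply: (le_lt_trans (y := dl / 2)); first by rewrite ge_min lexx.
  by rewrite ltr_pdivrMr // ltr_pMr // ltr1n.
have := Hu t; rewrite t0 tdl => /(_ isT); rewrite EG => H3.
pose Y := fun c => if S c then y c else x0 c.
pose P := fun c => x0 c + t *: (if S c then y c - x0 c else 0).
have hc : 0 <= (2 : R)^-1 <= 1.
  by rewrite invr_ge0 ler0n /= invf_le1 // ler1n.
have H1 := Hconv P (fun c => x0 c + t *: d2 c) _ hc.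
have E1 : (fun c => 2^-1 *: P c + (1 - 2^-1) *: (x0 c + t *: d2 c)) = x0.
  apply: funext => a; rewrite /P /d2; case: (S a);
  apply/matrixP => k l; by rewrite !mxE; field.
rewrite E1 in H1.
have ht : 0 <= t <= 1 by rewrite ltW.
have H2 := Hconv Y x0 _ ht.
have E2 : (fun c => t *: Y c + (1 - t) *: x0 c) = P.
  apply: funext => a; rewrite /P /Y; case: (S a);
  apply/matrixP => k l; by rewrite !mxE; ring.
rewrite E2 in H2.
have E3 : 1 - (2:R)^-1 = 2^-1 by field.
rewrite E3 in H1.
rewrite (Hloc y) -/Y.
set FP := F P in H1 H2; set FM := F (fun c => x0 c + t *: d2 c) in H1 H3.
set FY := F Y in H2 *; set F0 := F x0 in H1 H2 H3 *.
have H4 : F0 - t * (- tg + e) <= FP by move: H1 H3; lra.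
have H5 : t * (tg - e) <= t * (FY - F0) by move: H2 H4; lra.
rewrite ler_pM2l // in H5; lra.
Qed.
End Tang.

Lemma sum_coal (R : realType) (N : nat) (m : 'I_N -> nat) (i : 'I_N) (f : agent N m -> R) :
  \sum_(c | tag c == i) f c = \sum_(k < m i) f (ag N m i k).
Proof.
rewrite -(big_pred1_eq (+%R : Monoid.law (0:R)) i (fun i' => \sum_(k < m i') f (ag N m i' k))).
rewrite (sig_big_dep (fun i' => i' == i) (fun _ _ => true) (fun i' k => f (ag N m i' k))).
by apply: eq_big => [[i' k]|[i' k] _] //=; rewrite andbT.
Qed.

Lemma sym_dsum (R : realType) (T : finType) (e : rel T) (z : T -> R) :
  symmetric e -> \sum_j \sum_l (e j l : nat)%:R * (z j - z l) = 0.
Proof.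
move=> He; set S := \sum_j _.
have HS : S = - S.
  rewrite {2}/S exchange_big /= -sumrN; apply: eq_bigr => j _.
  rewrite -sumrN; apply: eq_bigr => l _; rewrite He -mulrN opprB //.
by move/eqP: HS; rewrite -addr_eq0 -mulr2n mulrn_eq0 /= => /eqP.
Qed.

Lemma dot_tr (R : realType) (p r : nat) (M : 'M[R]_(p, r)) (u : 'cV[R]_p) (y x : 'cV[R]_r) :
 \sum_kk (M^T *m u) kk 0 * (y kk 0 - x kk 0)
 = \sum_pp u pp 0 * ((M *m y) pp 0 - (M *m x) pp 0).
Proof.
under eq_bigr do rewrite mxE mulr_suml.
under [RHS]eq_bigr do rewrite !mxE -sumrB mulr_sumr.
rewrite exchange_big; apply: eq_bigr => pp _; apply: eq_bigr => kk _.
rewrite !mxE; ring.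
Qed.
Theorem lemma5
  (R : realType) (N : nat) (m : 'I_N -> nat) (r p : nat)
  (qB : forall i, 'I_(m i) -> nat)
  (B : forall i (j : 'I_(m i)), 'M[R]_(qB i j, r))
  (b : forall i (j : 'I_(m i)), 'cV[R]_(qB i j))
  (G : forall i, 'I_(m i) -> 'M[R]_(p, r))
  (g : forall i, 'I_(m i) -> 'cV[R]_p)
  (J : agent N m -> profile R N m r -> R)
  (gJ : agent N m -> agent N m -> profile R N m r -> 'cV[R]_r)
  (hb ell : R)
  (adj : forall i, rel 'I_(m i)) (abar : rel (agent N m))
  (Ee : forall i, 'I_(m i) -> 'cV[R]_r -> 'M[R]_r)
  (Ce : forall i, 'I_(m i) -> 'cV[R]_r -> 'cV[R]_r -> 'M[R]_r)
  (De : forall i, 'I_(m i) -> 'cV[R]_r -> 'cV[R]_r)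
  (qmu : forall i, 'I_(m i) -> nat)
  (Ups : forall i (j : 'I_(m i)), 'cV[R]_r -> 'cV[R]_r -> 'cV[R]_r -> 'cV[R]_r ->
          'M[R]_(r, qmu i j))
  (mu : forall i (j : 'I_(m i)), 'cV[R]_(qmu i j))
  (dist : forall i, 'I_(m i) -> R -> 'cV[R]_r)
  (alpha beta gamma kappa : R)
  (Hm : forall i, (0 < m i)%N)
  (HA1a : C1_with_grad J gJ)
  (HA1b : strongly_convex_coal B b J hb)
  (HA2 : grad_lipschitz gJ ell)
  (HA3 : slater B b G g)
  (HA4 : graphs_ok adj abar)
  (HEL : EL_regressor Ee Ce De Ups mu)
  (Hdist : bounded_disturbance dist)
  (Hgains : 0 < alpha /\ 0 < beta /\ 0 < gamma /\ 0 < kappa)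
  (xs : profile R N m r) (muh : forall i (j : 'I_(m i)), 'cV[R]_(qmu i j))
  (dh : forall i, 'I_(m i) -> R) (xh eta th : profile R N m r)
  (om : forall i (j : 'I_(m i)), 'cV[R]_(qB i j))
  (lam rho : forall i, 'I_(m i) -> 'cV[R]_p)
  (xi zeta : forall i, 'I_(m i) -> 'I_(m i) -> 'cV[R]_r)
  (s : agent N m -> agent N m -> 'cV[R]_r)
  (Heq : closed_loop_equilibrium B b G g gJ adj abar Ee Ce De Ups dist
           alpha beta gamma kappa xs muh dh xh eta th om lam rho xi zeta s) :
  is_NE B b G g J xs.
Proof.
case: Hgains => a0 [b0 [g0 k0]].
case: HA4 => Hadj Habar.
case: HA1b => hb0 Hcvx.
case: HA1a => Hder _.
have Hxe : forall a, xs a = eta a.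
  case=> i j; have := Heq i j => /= -[_ [_ [_ [Hx [Ht _]]]]].
  rewrite Ht sub0r in Hx.
  by apply/eqP; rewrite -subr_eq0 -oppr_eq0 -Hx.
have xseta : xs = eta by apply: funext.
have Hsf : forall a, sfull R N m r eta s a = eta.
  move=> a; apply: funext => q; rewrite /sfull; case: eqP => [->//|/eqP nq].
  apply/matrixP => k l; rewrite (ord1 l).
  suff H : sfull R N m r eta s a q k 0 = sfull R N m r eta s q q k 0.
    by move: H; rewrite /sfull eqxx (negbTE nq).
  apply: (@harm_eq R (agent N m) abar (fun a' => sfull R N m r eta s a' q k 0) q Habar).
  case=> i' j' nq'; have := Heq i' j' => /= -[_ [_ [_ [_ [_ [_ [_ [_ [_ [_ [_ HE]]]]]]]]]]].
  have := HE q; rewrite eq_sym => /(_ nq') /eqP.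
  rewrite scaler_eq0 oppr_eq0 (gt_eqF k0) /= => /eqP /(congr1 (fun M : 'cV[R]_r => M k 0)).
  rewrite summxE mxE => H; rewrite -[RHS]H; apply: eq_bigr => l' _; rewrite !mxE.
  done.
move=> i y [HyO HyX].
set j0 := Ordinal (Hm i).
have Hlc : forall j, pplus R (lam i j) = pplus R (lam i j0).
  move=> j; apply/matrixP => pp l; rewrite (ord1 l).
  apply: (@harm_eq R _ (adj i) (fun j => pplus R (lam i j) pp 0) j0 (proj2 (Hadj i))) => j' _.
  have := Heq i j' => /= -[_ [_ [_ [_ [_ [_ [_ [_ [H9 _]]]]]]]]].
  move/(congr1 (fun M : 'cV[R]_p => M pp 0)): H9; rewrite summxE mxE => H.
  by rewrite -[RHS]H; apply: eq_bigr => l' _; rewrite !mxE.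
have Hxic : forall j k, xi i j k = xi i k k.
  move=> j k; apply/matrixP => kk l; rewrite (ord1 l).
  apply: (@harm_eq R _ (adj i) (fun j => xi i j k kk 0) k (proj2 (Hadj i))) => j' _.
  have := Heq i j' => /= -[_ [_ [_ [_ [_ [_ [_ [_ [_ [_ [H11 _]]]]]]]]]]].
  move: (H11 k) => /eqP; rewrite scaler_eq0 (gt_eqF b0) /= => /eqP.
  move/(congr1 (fun M : 'cV[R]_r => M kk 0)); rewrite summxE mxE => H.
  by rewrite -[RHS]H; apply: eq_bigr => l' _; rewrite !mxE.
have Hsum : forall k kk, (m i)%:R * xi i k k kk 0
    = \sum_(j < m i) gJ (ag N m i j) (ag N m i k) xs kk 0.
  move=> k kk.
  have Hj : forall j, xi i j k kk 0 + \sum_(l < m i) (adj i j l)%:R * (zeta i j k kk 0 - zeta i l k kk 0)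
      = gJ (ag N m i j) (ag N m i k) xs kk 0.
    move=> j; have := Heq i j => /= -[_ [_ [_ [_ [_ [_ [_ [_ [_ [H10 [H11 _]]]]]]]]]]].
    move: (H11 k) => /eqP; rewrite scaler_eq0 (gt_eqF b0) /= => /eqP Hs.
    move: (H10 k) => /eqP; rewrite scaler_eq0 oppr_eq0 (gt_eqF b0) /= Hs addr0 Hsf -xseta subr_eq0.
    move=> /eqP /(congr1 (fun M : 'cV[R]_r => M kk 0)).
    rewrite mxE summxE => <-; congr (_ + _); apply: eq_bigr => l _; rewrite !mxE.
    done.
  rewrite -(eq_bigr _ (fun j _ => Hj j)) big_split /=.
  rewrite (@sym_dsum R _ (adj i) (fun j => zeta i j k kk 0) (proj1 (Hadj i))) addr0.
  rewrite (eq_bigr _ (fun j _ => congr1 (fun M : 'cV[R]_r => M kk 0) (Hxic j k))).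
  by rewrite sumr_const card_ord mulr_natl.
have Hom : forall k, pplus R (om i k + B i k *m eta (ag N m i k) - b i k) = om i k.
  move=> k; have := Heq i k => /= -[_ [_ [_ [_ [H5 [_ [H7 _]]]]]]].
  by move: H7; rewrite H5 mulmx0 sub0r addrC => /eqP; rewrite subr_eq0 => /eqP.
set L := pplus R (lam i j0).
have HA : forall k, xi i k k = - ((G i k)^T *m L + (B i k)^T *m om i k).
  move=> k; have := Heq i k => /= -[_ [_ [_ [_ [H5 [H6 _]]]]]].
  move: H6; rewrite H5 scaler0 sub0r Hom Hlc => /eqP; rewrite oppr_eq0 -addrA addr_eq0 => /eqP.
  done.
have Homc : forall k q, 0 <= om i k q 0 /\ om i k q 0 * ((B i k *m xs (ag N m i k)) q 0 - b i k q 0) = 0.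
  move=> k q; have := congr1 (fun M : 'cV[R]_(qB i k) => M q 0) (Hom k).
  rewrite xseta; move: (B i k *m eta (ag N m i k)) => w; rewrite !mxE /=.
  case: (leP 0 (om i k q 0 + w q 0 - b i k q 0)) => hX.
    move=> H; have -> : w q 0 - b i k q 0 = 0 by move: H; lra.
    by rewrite mulr0; split => //; rewrite -H.
  by move=> <-; rewrite lexx mul0r.
have HLc : forall pp, 0 <= L pp 0 /\ L pp 0 * ((\sum_(j < m i) G i j *m xs (ag N m i j)) pp 0
      - (\sum_(j < m i) g i j) pp 0) = 0.
  move=> pp.
  have HLn : 0 <= L pp 0 by rewrite /L mxE le_max lexx orbT.
  split => //.
  have Hj : forall j, (- lam i j pp 0 + Num.max (lam i j pp 0) 0)
      + ((G i j *m xs (ag N m i j)) pp 0 - g i j pp 0)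
      - \sum_(l < m i) (adj i j l)%:R * (rho i j pp 0 - rho i l pp 0) = 0.
    move=> j; have := Heq i j => /= -[_ [_ [_ [_ [_ [_ [_ [H8 [H9 _]]]]]]]]].
    move: H8; rewrite H9 subr0 -xseta => /(congr1 (fun M : 'cV[R]_p => M pp 0)).
    move: (G i j *m xs (ag N m i j)) => w.
    rewrite !mxE summxE => H; rewrite -[RHS]H !addrA; congr (_ - _).
    by apply: eq_bigr => l _; rewrite !mxE.
  have Htot : \sum_(j < m i) (- lam i j pp 0 + Num.max (lam i j pp 0) 0)
      + ((\sum_(j < m i) G i j *m xs (ag N m i j)) pp 0 - (\sum_(j < m i) g i j) pp 0) = 0.
    rewrite !summxE -sumrB -big_split /=.
    rewrite -[RHS](@sym_dsum R _ (adj i) (fun j => rho i j pp 0) (proj1 (Hadj i))).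
    apply: eq_bigr => j _; apply/eqP; rewrite -subr_eq0 addrA; apply/eqP; by move: (Hj j); rewrite !addrA.
  case: (eqVneq (L pp 0) 0) => [->|Lne]; first by rewrite mul0r.
  have Lp : 0 < L pp 0 by rewrite lt_def Lne HLn.
  have H0 : forall j, - lam i j pp 0 + Num.max (lam i j pp 0) 0 = 0.
    move=> j; have := congr1 (fun M : 'cV[R]_p => M pp 0) (Hlc j); rewrite -/L mxE => Hmx.
    case: (lerP 0 (lam i j pp 0)) => h.
      by rewrite addNr.
    by move: Hmx Lp; rewrite max_r ?ltW // => <-; rewrite ltxx.
  rewrite big1 ?add0r in Htot; last by move=> j _; exact: H0.
  by rewrite Htot mulr0.
have Hmxx : mix R N m r i xs xs = xs by apply: funext => a; rewrite /mix; case: ifP.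
have Htan : forall j, \sum_(c | tag c == i) \sum_kk gJ (ag N m i j) c xs kk 0 * (y c kk 0 - xs c kk 0)
    <= J (ag N m i j) (mix R N m r i y xs) - J (ag N m i j) xs.
  move=> j.
  have := @tangent R (agent N m) r (fun z => J (ag N m i j) (mix R N m r i z xs)) xs
    (fun c => tag c == i) (fun c => gJ (ag N m i j) c xs).
  rewrite /= Hmxx; apply.
  - move=> z1 z2 t ht.
    have Hom' : forall c : agent N m, tag c != tag (ag N m i j) ->
        in_Omega_ij R N m r qB B b (tag c) (tagged c) (xs c).
      case=> i' j' /= ti; have := HyO i' j'; rewrite /mix /= (negbTE ti) //.
    have := Hcvx (ag N m i j) xs Hom' z1 z2 t ht; rewrite /= => H; apply: (le_trans H).
    rewrite lerBlDr lerDl; apply: mulr_ge0.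
      case/andP: ht => t0 t1; apply: mulr_ge0; [apply: mulr_ge0|]; rewrite ?subr_ge0 //.
      by rewrite divr_ge0 // ltW.
    by apply: sumr_ge0 => c _; apply: sumr_ge0 => k _; apply: sqr_ge0.
  - move=> c tc v; have := Hder (ag N m i j) c xs v.
    have -> : (fun t : R => J (ag N m i j) (setblock R N m r xs c (xs c + t *: v)))
       = (fun t => J (ag N m i j) (mix R N m r i (fun a => if a == c then xs c + t *: v else xs a) xs)).
      apply: funext => t; congr (J _ _); apply: funext => a.
      rewrite /mix /setblock; case: eqP => [->|_]; first by rewrite tc.
      by case: ifP.
    done.
  - move=> z; congr (J _ _); apply: funext => a; rewrite /mix; case: ifP => //.
have Emix : forall k, mix R N m r i y xs (ag N m i k) = y (ag N m i k).
  by move=> k; rewrite /mix /= eqxx.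
pose P k := \sum_pp L pp 0 * ((G i k *m y (ag N m i k)) pp 0 - (G i k *m xs (ag N m i k)) pp 0).
pose Q k := \sum_q om i k q 0 * ((B i k *m y (ag N m i k)) q 0 - (B i k *m xs (ag N m i k)) q 0).
have Hkey : forall k, \sum_(j < m i) \sum_kk gJ (ag N m i j) (ag N m i k) xs kk 0
      * (y (ag N m i k) kk 0 - xs (ag N m i k) kk 0) = (m i)%:R * - (P k + Q k).
  move=> k; rewrite exchange_big /=.
  under eq_bigr do rewrite -mulr_suml -Hsum HA.
  rewrite /P /Q -!dot_tr -big_split /= -sumrN mulr_sumr; apply: eq_bigr => kk _.
  rewrite !mxE; ring.
have HQ : forall k, Q k <= 0.
  move=> k; apply: sumr_le0 => q _.
  case: (Homc k q) => o0 oc.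
  have := HyO i k; rewrite /in_Omega_ij Emix => /(_ q) Hf.
  have -> : (B i k *m y (ag N m i k)) q 0 - (B i k *m xs (ag N m i k)) q 0 =
    ((B i k *m y (ag N m i k)) q 0 - b i k q 0) - ((B i k *m xs (ag N m i k)) q 0 - b i k q 0).
    by ring.
  by rewrite mulrBr oc subr0 mulr_ge0_le0 // subr_le0.
have HP : \sum_(k < m i) P k <= 0.
  rewrite /P exchange_big /=; apply: sumr_le0 => pp _.
  rewrite -mulr_sumr sumrB -!summxE.
  case: (HLc pp) => L0 Lc.
  have := HyX i; rewrite /in_X_i (eq_bigr _ (fun k _ => congr1 _ (Emix k))) => /(_ pp) Hf.
  set VY := (\sum_(k < m i) G i k *m y (ag N m i k)) pp 0 in Hf *.
  set VX := (\sum_(k < m i) G i k *m xs (ag N m i k)) pp 0 in Lc *.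
  set Gs := (\sum_(k < m i) g i k) pp 0 in Hf Lc.
  have -> : VY - VX = (VY - Gs) - (VX - Gs) by ring.
  by rewrite mulrBr Lc subr0 mulr_ge0_le0 // subr_le0.
rewrite /Jc -subr_ge0 -mulrBr; apply: mulr_ge0; first by rewrite invr_ge0 ler0n.
rewrite -sumrB.
apply: (@le_trans _ _ (\sum_(j < m i) \sum_(c | tag c == i) \sum_kk gJ (ag N m i j) c xs kk 0
   * (y c kk 0 - xs c kk 0))); last by apply: ler_sum => j _; exact: Htan j.
under eq_bigr do rewrite sum_coal.
rewrite exchange_big /=.
under eq_bigr do rewrite Hkey.
rewrite -mulr_sumr; apply: mulr_ge0 => //.
rewrite sumrN big_split /= oppr_ge0.
have HQs : \sum_(k < m i) Q k <= 0 by apply: sumr_le0 => k _; exact: HQ k.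
move: HP HQs; lra.
Qed.
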